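(* Let $Y$ be a solid vector space and $(X,d)$ a cone metric space over $Y$. Then convergence in $X$ has the following properties: (i) any convergent sequence has a unique limit; (ii) any subsequence of a convergent sequence converges to the same limit; (iii) any convergent sequence is bounded, i.e. its set of terms is contained in some closed ball; (iv) the convergence and the limit of a sequence do not depend on finitely many of its terms.
   Context: Vector space with convergence: a real vector space $Y$ with a relation $\to$ between sequences in $Y$ and points of $Y$ (uniqueness of limits not assumed) such that (C1) $x_n\to x$, $y_n\to y$ imply $x_n+y_n\to x+y$; (C2) $x_n\to x$, $\lambda\in\mathbb R$ imply $\lambda x_n\to\lambda x$; (C3) $\lambda_n\to\lambda$ in $\mathbb R$ imply $\lambda_n x\to\lambda x$. $A\subseteq Y$ is open if $x_n\to x\in A$ implies $x_n\in A$ for all but finitely many $n$; closed if $x_n\to x$, $x_n\in A$ $\forall n$ imply $x\in A$; $A^\circ$ is the union of all open subsets of $A$. A cone is a nonempty closed $K$ with $\lambda K\subseteq K$ ($\lambda\ge0$), $K+K\subseteq K$, $K\cap(-K)=\{0\}$; solid if $K\ne\{0\}$, $K^\circ\ne\emptyset$. A vector ordering is a partial order $\preceq$ with (V1) $x\preceq y\Rightarrow x+z\preceq y+z$; (V2) $\lambda\ge0$, $x\preceq y\Rightarrow\lambda x\preceq\lambda y$; (V3) $x_n\to x$, $y_n\to y$, $x_n\preceq y_n$ $\forall n\Rightarrow x\preceq y$. Solid vector space: positive cone $K=\{x:x\succeq0\}$ solid, with $x\prec y$ iff $y-x\in K^\circ$. Cone metric space over $Y$: nonempty $X$ with $d\colon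 X\times X\to Y$, $d(x,y)\succeq0$, $d(x,y)=0$ iff $x=y$, $d(x,y)=d(y,x)$, $d(x,y)\preceq d(x,z)+d(z,y)$. Convergence in $X$ is with respect to the topology with basis the open balls $U(x,r)=\{y:d(y,x)\prec r\}$ ($r\succ0$): $x_n\to x$ iff for every $c\succ0$, $d(x_n,x)\prec c$ for all but finitely many $n$. Closed ball $\overline U(x,r)=\{y:d(y,x)\preceq r\}$, $r\succeq0$. *)

(* Defs.v *)
From HB Require Import structures.
From mathcomp Require Import all_boot all_order all_algebra.
From mathcomp Require Import reals.
Set Implicit Arguments. Unset Strict Implicit. Unset Printing Implicit Defensive.
Import Order.TTheory GRing.Theory Num.Theory.
Local Open Scope ring_scope.

Definition real_cvg (R : realType) (lam : nat -> R) (l : R) : Prop :=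
  forall e : R, 0 < e -> exists N : nat, forall n : nat, (N <= n)%N -> `|lam n - l| < e.

Definition is_open (R : realType) (Y : lmodType R)
  (cv : (nat -> Y) -> Y -> Prop) (A : Y -> Prop) : Prop :=
  forall (xs : nat -> Y) (x : Y), cv xs x -> A x ->
    exists N : nat, forall n : nat, (N <= n)%N -> A (xs n).

Definition is_closed (R : realType) (Y : lmodType R)
  (cv : (nat -> Y) -> Y -> Prop) (A : Y -> Prop) : Prop :=
  forall (xs : nat -> Y) (x : Y), cv xs x -> (forall n, A (xs n)) -> A x.

Definition interior (R : realType) (Y : lmodType R)
  (cv : (nat -> Y) -> Y -> Prop) (A : Y -> Prop) (x : Y) : Prop :=
  exists U : Y -> Prop, is_open cv U /\ (forall y, U y -> A y) /\ U x.

Definition is_cone (R : realType) (Y : lmodType R)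
  (cv : (nat -> Y) -> Y -> Prop) (K : Y -> Prop) : Prop :=
  (exists x, K x) /\ is_closed cv K /\
  (forall (l : R) (x : Y), 0 <= l -> K x -> K (l *: x)) /\
  (forall x y, K x -> K y -> K (x + y)) /\
  (forall x, K x -> K (- x) -> x = 0).

Definition solid_cone (R : realType) (Y : lmodType R)
  (cv : (nat -> Y) -> Y -> Prop) (K : Y -> Prop) : Prop :=
  is_cone cv K /\ (exists x, K x /\ x <> 0) /\ (exists x, interior cv K x).

Record solid_vector_space (R : realType) (Y : lmodType R) := SolidVS {
  conv : (nat -> Y) -> Y -> Prop;
  conv_add : forall xs ys x y, conv xs x -> conv ys y ->
      conv (fun n => xs n + ys n) (x + y);
  conv_scale : forall xs x (l : R), conv xs x -> conv (fun n => l *: xs n) (l *: x);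
  conv_real : forall (lam : nat -> R) (l : R) (x : Y), real_cvg lam l ->
      conv (fun n => lam n *: x) (l *: x);
  vle : Y -> Y -> Prop;
  vle_refl : forall x, vle x x;
  vle_anti : forall x y, vle x y -> vle y x -> x = y;
  vle_trans : forall x y z, vle x y -> vle y z -> vle x z;
  vle_add : forall x y z, vle x y -> vle (x + z) (y + z);
  vle_scale : forall (l : R) x y, 0 <= l -> vle x y -> vle (l *: x) (l *: y);
  vle_closed : forall xs ys x y, conv xs x -> conv ys y ->
      (forall n, vle (xs n) (ys n)) -> vle x y;
  pos_cone_solid : solid_cone conv (fun x => vle 0 x)
}.

Definition vlt (R : realType) (Y : lmodType R) (S : solid_vector_space Y)
  (x y : Y) : Prop := interior (conv S) (fun z => vle S 0 z) (y - x).

Record cone_metric (R : realType) (Y : lmodType R) (S : solid_vector_space Y)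
  (X : Type) := ConeMetric {
  dist : X -> X -> Y;
  X_inhabited : inhabited X;
  dist_ge0 : forall x y, vle S 0 (dist x y);
  dist_eq0 : forall x y, dist x y = 0 <-> x = y;
  dist_sym : forall x y, dist x y = dist y x;
  dist_tri : forall x y z, vle S (dist x y) (dist x z + dist z y)
}.

Definition cm_conv (R : realType) (Y : lmodType R) (S : solid_vector_space Y)
  (X : Type) (d : cone_metric S X) (xs : nat -> X) (x : X) : Prop :=
  forall c : Y, vlt S 0 c ->
    exists N : nat, forall n : nat, (N <= n)%N -> vlt S (dist d (xs n) x) c.

(* Main.v *)
Require Import Defs.
From HB Require Import structures.
From mathcomp Require Import all_boot all_order all_algebra.
From mathcomp Require Import reals.
From mathcomp Require Import zify.
Import Order.TTheory GRing.Theory Num.Theory.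
Local Open Scope ring_scope.

Section Aux.
Variables (R : realType) (Y : lmodType R) (S : solid_vector_space Y).

Lemma int_K (x : Y) : interior (conv S) (fun z => vle S 0 z) x -> vle S 0 x.
Proof. by case=> U [_ [HU Ux]]; apply: HU. Qed.

Lemma vlt_vle (a b : Y) : vlt S a b -> vle S a b.
Proof.
move=> /int_K H; have := vle_add a H; by rewrite add0r subrK.
Qed.

Lemma vle_addr (a b : Y) : vle S 0 b -> vle S a (a + b).
Proof. move=> H; have := vle_add a H; by rewrite add0r addrC. Qed.

Lemma int_scale (l : R) (c : Y) : 0 < l ->
  interior (conv S) (fun z => vle S 0 z) c ->
  interior (conv S) (fun z => vle S 0 z) (l *: c).
Proof.
move=> l0 [U [oU [sU Uc]]].
have ln0 : l != 0 by rewrite gt_eqF.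
exists (fun y => U (l^-1 *: y)); split; [|split].
- move=> xs x cx Ux.
  have := oU _ _ (conv_scale l^-1 cx) Ux; by [].
- move=> y /sU H.
  have := vle_scale (ltW l0) H; by rewrite scaler0 scalerA mulfV // scale1r.
- by rewrite scalerA mulVf // scale1r.
Qed.

Lemma cvg_inv : real_cvg (fun m : nat => (m.+1%:R : R)^-1) 0.
Proof.
move=> e e0.
have ei0 : 0 <= e^-1 by rewrite invr_ge0 ltW.
exists (Num.Def.archi_bound e^-1) => n Hn.
rewrite subr0 ger0_norm ?invr_ge0 ?ler0n //.
rewrite invf_plt ?posrE ?ltr0Sn //.
apply: (lt_le_trans (archi_boundP ei0)).
rewrite ler_nat; exact: leq_trans Hn (leqnSn n).
Qed.

Lemma cvg_const (l : R) : real_cvg (fun _ : nat => l) l.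
Proof. by move=> e e0; exists 0%N => n _; rewrite subrr normr0. Qed.

End Aux.
Arguments vlt_vle {R Y S a b}.
Arguments int_K {R Y S x}.
Arguments vle_addr {R Y S a b}.
Arguments int_scale {R Y S l c}.

Theorem theorem9p15 (R : realType) (Y : lmodType R) (S : solid_vector_space Y)
  (X : Type) (d : cone_metric S X) :
  (* (i) uniqueness of limits *)
  (forall (xs : nat -> X) (x y : X), cm_conv d xs x -> cm_conv d xs y -> x = y) /\
  (* (ii) subsequences *)
  (forall (xs : nat -> X) (x : X) (phi : nat -> nat),
      (forall m n, (m < n)%N -> (phi m < phi n)%N) ->
      cm_conv d xs x -> cm_conv d (fun n => xs (phi n)) x) /\
  (* (iii) boundedness: terms lie in a closed ball *)
  (forall (xs : nat -> X) (x : X), cm_conv d xs x ->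
      exists (a : X) (r : Y), vle S 0 r /\ forall n, vle S (dist d (xs n) a) r) /\
  (* (iv) independence of finitely many terms (changing, removing or adding) *)
  (forall (xs ys : nat -> X) (N k : nat),
      (forall n, (N <= n)%N -> ys n = xs (n + k)%N) ->
      forall x : X, cm_conv d xs x <-> cm_conv d ys x).
Proof.
have [_ [_ [c0 Ic0]]] := pos_cone_solid S.
have vlt0 : forall c : Y, interior (conv S) (fun z => vle S 0 z) c -> vlt S 0 c.
  by move=> c; rewrite /vlt subr0.
split; [|split; [|split]].
- move=> xs x y Hx Hy.
  set D := dist d x y.
  have key : forall c, interior (conv S) (fun z => vle S 0 z) c -> vle S D (c + c).
    move=> c Ic.
    have [N1 H1] := Hx c (vlt0 _ Ic).
    have [N2 H2] := Hy c (vlt0 _ Ic).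
    pose n := maxn N1 N2.
    have h1 := vlt_vle (H1 n (leq_maxl _ _)).
    have h2 := vlt_vle (H2 n (leq_maxr _ _)).
    have t := dist_tri d x y (xs n).
    rewrite (dist_sym d x (xs n)) in t.
    apply: vle_trans t _.
    apply: vle_trans (vle_add _ h1) _.
    rewrite addrC [X in vle _ _ X]addrC.
    exact: vle_add.
  have Hle : vle S (1 *: D) (0 *: c0).
    apply: (vle_closed (conv_real S D (@cvg_const R 1))
             (conv_real S c0 (@cvg_inv R))) => m.
    rewrite scale1r.
    have lp : 0 < (m.+1%:R : R)^-1 / 2.
      by rewrite divr_gt0 // invr_gt0 ltr0Sn.
    have := key _ (int_scale lp Ic0).
    by rewrite -scalerDl -splitr.
  rewrite scale1r scale0r in Hle.
  apply/(dist_eq0 d); exact: vle_anti Hle (dist_ge0 d x y).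
- move=> xs x phi Hphi Hx c Hc.
  have [N HN] := Hx c Hc.
  have ge : forall n, (n <= phi n)%N.
    elim=> [|n IH] //; exact: leq_ltn_trans IH (Hphi _ _ (ltnSn n)).
  exists N => n Hn; apply: HN; exact: leq_trans Hn (ge n).
- move=> xs x Hx.
  have [N HN] := Hx c0 (vlt0 _ Ic0).
  have gen : forall M, exists r, [/\ vle S 0 r, vle S c0 r &
                 forall n, (n < M)%N -> vle S (dist d (xs n) x) r].
    elim=> [|M [r [r0 cr Hr]]].
      by exists c0; split => //; [exact: int_K | exact: vle_refl].
    have Hd := dist_ge0 d (xs M) x.
    exists (r + dist d (xs M) x); split.
    + exact: vle_trans r0 (vle_addr Hd).
    + exact: vle_trans cr (vle_addr Hd).
    + move=> n; rewrite ltnS leq_eqVlt => /orP [/eqP->|Hn].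
      * rewrite addrC; exact: vle_addr r0.
      * exact: vle_trans (Hr _ Hn) (vle_addr Hd).
  have [r [r0 cr Hr]] := gen N.
  exists x, r; split => // n.
  case: (ltnP n N) => Hn; first exact: Hr.
  exact: vle_trans (vlt_vle (HN n Hn)) cr.
- move=> xs ys N k Hys x; split.
  + move=> Hx c Hc; have [N0 HN0] := Hx c Hc.
    exists (maxn N N0) => n Hn.
    rewrite Hys; last exact: leq_trans (leq_maxl _ _) Hn.
    apply: HN0; apply: leq_trans (leq_maxr N N0) _.
    exact: leq_trans Hn (leq_addr k n).
  + move=> Hy c Hc; have [N1 HN1] := Hy c Hc.
    exists (N1 + N + k)%N => n Hn.
    have e : n = ((n - k) + k)%N by lia.
    have := HN1 (n - k)%N ltac:(lia).
    by rewrite Hys -?e //; lia.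
Qed.
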